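(* Let $p$ be a positive stochastic choice function for which $\sim_p$ is transitive. If $p$ exhibits the similarity effect, then $p$ satisfies Similar Regularity.
   Context: $X$ is a finite set, $\mathscr{A}$ the nonempty subsets; $p:X\times\mathscr{A}\to[0,1]$ with $\sum_{a\in A}p(a,A)=1$, $p(x,A)=0$ for $x\notin A$, $p(a,A)>0$ for $a\in A$; $A\cup x=A\cup\{x\}$. $a\sim_p b$ means $\frac{p(a,A)}{p(b,A)}=\frac{p(a,\{a,b\})}{p(b,\{a,b\})}$ for every $A\in\mathscr{A}$ containing $a,b$. Similarity effect: for all $A\in\mathscr{A}$, $a,b\in A$, $x\notin A$: if $a\sim_p x$ and $b\not\sim_p x$, then $\frac{p(a,A\cup x)}{p(b,A\cup x)}<\frac{p(a,A)}{p(b,A)}$. Similar Regularity: for any $A\in\mathscr{A}$, $x\in A$ and $y\in X$ with $x\sim_p y$, $p(x,A\cup y)\le p(x,A)$. *)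

(* Defs.v *)
From mathcomp Require Import all_boot all_order all_algebra.
Set Implicit Arguments. Unset Strict Implicit. Unset Printing Implicit Defensive.
Import Order.TTheory GRing.Theory Num.Theory.
Local Open Scope ring_scope.

(* Only nonempty menus A are in the domain
   (\mathscr{A}); values of p at the empty set are irrelevant. *)
Definition positive_scf (X : finType) (R : realFieldType)
    (p : X -> {set X} -> R) : Prop :=
  forall A : {set X}, A != set0 ->
    [/\ \sum_(a in A) p a A = 1,
        (forall x, x \notin A -> p x A = 0) &
        (forall a, a \in A -> 0 < p a A)].

Definition simp (X : finType) (R : realFieldType)
    (p : X -> {set X} -> R) (a b : X) : Prop :=
  forall A : {set X}, a \in A -> b \in A ->
    p a A / p b A = p a [set a; b] / p b [set a; b].

Definition simp_transitive (X : finType) (R : realFieldType)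
    (p : X -> {set X} -> R) : Prop :=
  forall a b c : X, simp p a b -> simp p b c -> simp p a c.

Definition similarity_effect (X : finType) (R : realFieldType)
    (p : X -> {set X} -> R) : Prop :=
  forall (A : {set X}) (a b x : X), A != set0 -> a \in A -> b \in A ->
    x \notin A -> simp p a x -> ~ simp p b x ->
    p a (x |: A) / p b (x |: A) < p a A / p b A.

Definition similar_regularity (X : finType) (R : realFieldType)
    (p : X -> {set X} -> R) : Prop :=
  forall (A : {set X}) (x y : X), A != set0 -> x \in A -> simp p x y ->
    p x (y |: A) <= p x A.

(* Main.v *)
Require Import Defs.
From mathcomp Require Import all_boot all_order all_algebra.
From Stdlib Require Import Classical.
Import Order.TTheory GRing.Theory Num.Theory.
Local Open Scope ring_scope.

Lemma simp_sym (X : finType) (R : realFieldType) (p : X -> {set X} -> R) a b :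
  simp p a b -> simp p b a.
Proof.
move=> h A hb ha; rewrite setUC -[p b A / _]invf_div h // invf_div.
by [].
Qed.

Theorem proposition7 (X : finType) (R : realFieldType) (p : X -> {set X} -> R) :
  positive_scf p -> simp_transitive p -> similarity_effect p ->
  similar_regularity p.
Proof.
move=> hp htr hse A x y hA0 hxA hxy.
have [yA|yA] := boolP (y \in A).
  by rewrite (setUidPr _) ?sub1set.
set B := y |: A.
have hB0 : B != set0 by apply/set0Pn; exists y; rewrite setU11.
have [sA _ pA] := hp A hA0.
have [sB _ pB] := hp B hB0.
have AB : forall a, a \in A -> a \in B by move=> a ha; rewrite setU1r.
have pxA := pA x hxA. have pxB := pB x (AB x hxA).
have key : forall a, a \in A -> p a A * p x B <= p a B * p x A.
  move=> a ha.
  have paA := pA a ha. have paB := pB a (AB a ha).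
  case: (classic (simp p a y)) => hay.
    have hax : simp p a x by exact: (htr a y x hay (@simp_sym _ _ _ _ _ hxy)).
    have e : p a A / p x A = p a B / p x B by rewrite hax // hax // AB.
    move/eqP: e; rewrite eqr_div ?(gt_eqF pxA) ?(gt_eqF pxB) // => /eqP ->.
    exact: lexx.
  have h := hse A x a y hA0 hxA ha yA hxy hay.
  rewrite ltr_pdivrMr // mulrAC ltr_pdivlMr // in h.
  rewrite mulrC [p a B * _]mulrC. by rewrite ltW.
have s1 : \sum_(a in A) p a A * p x B <= \sum_(a in A) p a B * p x A.
  by apply: ler_sum => a ha; apply: key.
rewrite -!mulr_suml sA mul1r in s1.
apply: (le_trans s1).
have sAB : \sum_(a in A) p a B <= 1.
  move: sB; rewrite /B big_setU1 //= => e.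
  rewrite -e lerDr; apply: ltW; apply: pB; exact: setU11.
by rewrite -[leRHS]mul1r ler_pM2r.
Qed.
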